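(* Let $\mathcal{A}$ be a collection of pairwise non-parallel hyperplanes in $Q=S_1\times\cdots\times S_n$, let $0\le a\le n$, let $\mathbb{P}_a$ be a probability measure on $Q_a$, let $\delta_{a+1},\dots,\delta_n\in[0,1/2]$, and let $\mathbb{P}_k$ ($a\le k\le n$) be defined as in the context. Let $a\le k\le n$ and let $A$ be any hyperplane in $Q$ with $F(A)\subseteq[k]$ (viewed as a subset of $Q_k$). If $F(A) = I\cup J$ with $I\subseteq[a]$ and $J\subseteq[a+1,k]$, then $\mathbb{P}_k(A)\le c(I)\,\nu(J)$.
   Context: $S_1,\dots,S_n$ are finite sets each with at least two elements; $Q_k = S_1\times\cdots\times S_k$. A hyperplane is $A = A_1\times\cdots\times A_n\subseteq Q$ with each $A_k$ either $S_k$ or a singleton in $S_k$; $F(A)=\{k: A_k\text{ is a singleton}\}$; hyperplanes are parallel if they have the same $F$. Hyperplanes in $\mathcal{A}$ have non-empty $F(A)$; write $\mathcal{A}=\{A_F:F\in\mathcal{F}\}$. A set $X\subseteq Q_k$ is identified with $X\times S_{k+1}\times\cdots\times S_n$; a hyperplane with $F(A)\subseteq[k]$ is viewed as a subset of $Q_k$. Let $\mathcal{F}_k=\{F\in\mathcal{F}:F\subseteq[k]\}$, $\mathcal{N}_k=\mathcal{F}_k\setminus\mathcal{F}_{k-1}$, $B_k=\bigcup_{F\in\mathcal{N}_k}A_F\subseteq Q_k$. For $k>a$, given $\mathbb{P}_{k-1}$ on $Q_{k-1}$, let $\alpha_k(x)=|\{y\in S_k:(x,y)\in B_k\}|/|S_k|$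 for $x\in Q_{k-1}$, and define $\mathbb{P}_k(x,y)=\max\{0,\frac{\alpha_k(x)-\delta_k}{\alpha_k(x)(1-\delta_k)}\}\frac{\mathbb{P}_{k-1}(x)}{|S_k|}$ if $(x,y)\in B_k$ and $\mathbb{P}_k(x,y)=\min\{\frac{1}{1-\alpha_k(x)},\frac{1}{1-\delta_k}\}\frac{\mathbb{P}_{k-1}(x)}{|S_k|}$ otherwise. For $I\subseteq[a]$, $c(I)=\max\{\mathbb{P}_a(H):H\text{ a hyperplane in }Q_a\text{ with }F(H)=I\}$; for $J\subseteq[a+1,n]$, $\nu(J)=\prod_{j\in J}\frac{1}{(1-\delta_j)|S_j|}$. *)

(* Defs.v *)
From mathcomp Require Import all_boot all_order all_algebra.
Set Implicit Arguments. Unset Strict Implicit. Unset Printing Implicit Defensive.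
Import Order.TTheory GRing.Theory Num.Theory.
Local Open Scope ring_scope.

(* Conventions (0-based): coordinates are 0,...,n-1 (paper's coordinate i+1 is
   our coordinate i).  S_i is modelled as {0,...,m i - 1}.  Points of
   Q_k = S_0 x ... x S_{k-1} are lists of naturals of length k. *)

Fixpoint Qseq (m : nat -> nat) (k : nat) : seq (seq nat) :=
  match k with
  | 0 => [:: [::]]
  | k'.+1 => [seq rcons x y | x <- Qseq m k', y <- iota 0 (m k')]
  end.

(* A hyperplane of Q: h i = Some v means A_i = {v}; h i = None means A_i = S_i. *)
Definition hyp (n : nat) := {ffun 'I_n -> option nat}.

Definition hyp_valid (n : nat) (m : nat -> nat) (h : hyp n) : Prop :=
  forall (i : 'I_n) (v : nat), h i = Some v -> (v < m i)%N.

Definition Fh (n : nat) (h : hyp n) : {set 'I_n} := [set i | h i != None].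

Definition inhyp (n : nat) (h : hyp n) (x : seq nat) : bool :=
  [forall i : 'I_n, if h i is Some v then nth 0%N x i == v else true].

Definition measQ (R : realFieldType) (m : nat -> nat) (k : nat)
  (P : seq nat -> R) (A : seq nat -> bool) : R :=
  \sum_(x <- Qseq m k | A x) P x.

(* z ∈ B_{k+1} (coordinate k is the new one): z lies in some A_F with
   F ⊆ {0..k} and k ∈ F, i.e. F ∈ N_{k+1}. *)
Definition inB (n : nat) (Aset : seq (hyp n)) (k : nat) (z : seq nat) : bool :=
  has (fun h => [&& [forall i in Fh h, (i < k.+1)%N],
                    [exists i in Fh h, (i == k :> nat)] & inhyp h z]) Aset.

Definition alpha (R : realFieldType) (n : nat) (m : nat -> nat)
  (Aset : seq (hyp n)) (k : nat) (x : seq nat) : R :=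
  (count (fun y => inB Aset k (rcons x y)) (iota 0 (m k)))%:R / (m k)%:R.

(* From P on Q_k build P on Q_{k+1}, adding coordinate k with parameter d
   (paper's delta_{k+1}). *)
Definition Pstep (R : realFieldType) (n : nat) (m : nat -> nat)
  (Aset : seq (hyp n)) (k : nat) (d : R) (P : seq nat -> R) (z : seq nat) : R :=
  let x := take k z in
  let al := alpha R m Aset k x in
  if inB Aset k z then
    Num.max 0 ((al - d) / (al * (1 - d))) * P x / (m k)%:R
  else
    Num.min (1 / (1 - al)) (1 / (1 - d)) * P x / (m k)%:R.

Fixpoint Piter (R : realFieldType) (n : nat) (m : nat -> nat)
  (Aset : seq (hyp n)) (a : nat) (delta : nat -> R) (Pa : seq nat -> R)
  (j : nat) : seq nat -> R :=
  match j with
  | 0 => Pa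
  | j'.+1 => Pstep m Aset (a + j') (delta (a + j'))
               (Piter m Aset a delta Pa j')
  end.

Definition Pk (R : realFieldType) (n : nat) (m : nat -> nat)
  (Aset : seq (hyp n)) (a : nat) (delta : nat -> R) (Pa : seq nat -> R)
  (k : nat) : seq nat -> R :=
  Piter m Aset a delta Pa (k - a).

Definition hyp_of (n : nat) (I : {set 'I_n}) (x : seq nat) : hyp n :=
  [ffun i => if i \in I then Some (nth 0%N x i) else None].

(* c(I) = max of P_a(H) over hyperplanes H of Q_a with F(H) = I (for I ⊆ [a]);
   every such H is hyp_of I x for some x in Q_a, and P_a >= 0 so the default 0
   of the max is harmless. *)
Definition cI (R : realFieldType) (n : nat) (m : nat -> nat) (a : nat)
  (Pa : seq nat -> R) (I : {set 'I_n}) : R :=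
  \big[Num.max/0]_(x <- Qseq m a) measQ m a Pa (inhyp (hyp_of I x)).

Definition nu (R : realFieldType) (n : nat) (m : nat -> nat) (delta : nat -> R)
  (J : {set 'I_n}) : R :=
  \prod_(j in J) (1 / ((1 - delta j) * (m j)%:R)).

(* Main.v *)
Require Import Defs.
From mathcomp Require Import all_boot all_order all_algebra.
From mathcomp Require Import ring lra zify.
Import Order.TTheory GRing.Theory Num.Theory.
Local Open Scope ring_scope.

Lemma size_Qseq m k x : x \in Qseq m k -> size x = k.
Proof.
elim: k x => [|k IH] x /=; first by rewrite inE => /eqP ->.
case/allpairsP => [[x' y]] /= [hx _ ->]. by rewrite size_rcons (IH _ hx).
Qed.

Lemma Qseq_rcons m k z : z \in Qseq m k.+1 ->
  exists x y, [/\ x \in Qseq m k, (y < m k)%N & z = rcons x y].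
Proof.
case/allpairsP => [[x y]] /= [hx hy ->]; exists x, y; split => //.
by move: hy; rewrite mem_iota.
Qed.

Lemma mem_Qseq m k x : size x = k ->
  (forall i, (i < k)%N -> (nth 0%N x i < m i)%N) -> x \in Qseq m k.
Proof.
elim: k x => [|k IH] x.
  by move/size0nil ->; rewrite inE.
case/lastP: x => [//|x y]; rewrite size_rcons => [[hs]] hx /=.
apply/allpairsP; exists (x, y) => /=; split => //.
  apply: IH => // i hi; have := hx i (leqW hi); by rewrite nth_rcons hs hi.
rewrite mem_iota /= add0n. have := hx k (ltnSn k). by rewrite nth_rcons hs ltnn eqxx.
Qed.

Lemma sum_Qseq_S (R : realFieldType) m k (F : seq nat -> R) :
  \sum_(z <- Qseq m k.+1) F z =
  \sum_(x <- Qseq m k) \sum_(y <- iota 0 (m k)) F (rcons x y).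
Proof. by rewrite /= big_allpairs_dep. Qed.

Lemma sum_if (R : realFieldType) (s : seq nat) (b : pred nat) (c1 c2 : R) :
  \sum_(y <- s) (if b y then c1 else c2) =
  (count b s)%:R * c1 + (count (predC b) s)%:R * c2.
Proof.
elim: s => [|y s IH]; first by rewrite big_nil !mul0r addr0.
rewrite big_cons IH /= !natrD; case: (b y) => /=; ring.
Qed.

Lemma bigmax_ge (R : realFieldType) (T : eqType) (F : T -> R) (s : seq T) x :
  x \in s -> F x <= \big[Num.max/0]_(y <- s) F y.
Proof.
elim: s => [//|y s IH]; rewrite inE big_cons => /orP [/eqP ->|/IH h].
  by rewrite le_max lexx.
by rewrite le_max h orbT.
Qed.

Lemma take_rcons_size (x : seq nat) y k : size x = k -> take k (rcons x y) = x.
Proof. by move=> <-; rewrite -cats1 take_size_cat. Qed.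

Lemma alpha_bnd (R : realFieldType) n m (Aset : seq (hyp n)) k x :
  0 <= alpha R m Aset k x <= 1.
Proof.
rewrite /alpha; case: (posnP (m k)) => [->|mk].
  by rewrite invr0 mulr0 lexx ler01.
apply/andP; split; first by rewrite divr_ge0.
rewrite ler_pdivrMr ?ltr0n // mul1r ler_nat.
by rewrite -[X in (_ <= X)%N](size_iota 0) count_size.
Qed.

Lemma keyineq (R : realFieldType) (al d : R) : 0 <= al <= 1 -> 0 <= d <= 1/2 ->
  al * Num.max 0 ((al - d) / (al * (1 - d))) +
  (1 - al) * Num.min (1 / (1 - al)) (1 / (1 - d)) <= 1.
Proof.
move=> /andP[al0 al1] /andP[d0 d1].
have hd : 0 < 1 - d by lra.
case: (lerP al d) => ald.
  have -> : Num.max 0 ((al - d) / (al * (1 - d))) = 0.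
    apply/max_idPl; apply: mulr_le0_ge0; first by lra.
    by rewrite invr_ge0 mulr_ge0 // ltW.
  have ha : 0 < 1 - al by lra.
  rewrite mulr0 add0r.
  apply: le_trans (ler_wpM2l (ltW ha) (_ : _ <= 1 / (1 - al))) _.
    by rewrite ge_min lexx.
  by rewrite mul1r mulfV // gt_eqF.
have alp : 0 < al by lra.
have -> : Num.max 0 ((al - d) / (al * (1 - d))) = (al - d) / (al * (1 - d)).
  apply/max_idPr; apply: divr_ge0; first by lra.
  by rewrite mulr_ge0 // ltW.
have -> : al * ((al - d) / (al * (1 - d))) = (al - d) / (1 - d).
  by field; rewrite ?gt_eqF.
apply: le_trans (_ : _ <= (al - d) / (1 - d) + (1 - al) * (1 / (1 - d))) _.
  rewrite lerD2l; apply: ler_wpM2l; first by lra.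
  by rewrite ge_min lexx orbT.
rewrite le_eqVlt; apply/orP; left; apply/eqP.
by field; rewrite gt_eqF.
Qed.

Lemma Pstep_rcons (R : realFieldType) n m (Aset : seq (hyp n)) k (d : R) P x y :
  size x = k ->
  Pstep m Aset k d P (rcons x y) =
  if inB Aset k (rcons x y) then
    Num.max 0 ((alpha R m Aset k x - d) / (alpha R m Aset k x * (1 - d))) * P x / (m k)%:R
  else
    Num.min (1 / (1 - alpha R m Aset k x)) (1 / (1 - d)) * P x / (m k)%:R.
Proof. by move=> hs; rewrite /Pstep take_rcons_size. Qed.

Lemma Pstep_ge0 (R : realFieldType) n m (Aset : seq (hyp n)) k (d : R) P x y :
  0 <= d <= 1/2 -> size x = k -> 0 <= P x -> 0 <= Pstep m Aset k d P (rcons x y).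
Proof.
move=> /andP[d0 d1] hs P0; rewrite Pstep_rcons //.
have /andP[al0 al1] := alpha_bnd R _ m Aset k x.
case: ifP => _; rewrite mulr_ge0 ?invr_ge0 ?ler0n // mulr_ge0 //.
  by rewrite le_max lexx.
rewrite le_min !divr_ge0 ?ler01 //; lra.
Qed.

Lemma Pstep_le (R : realFieldType) n m (Aset : seq (hyp n)) k (d : R) P x y :
  0 <= d <= 1/2 -> (0 < m k)%N -> size x = k -> 0 <= P x ->
  Pstep m Aset k d P (rcons x y) <= P x * (1 / ((1 - d) * (m k)%:R)).
Proof.
move=> /andP[d0 d1] mk hs P0; rewrite Pstep_rcons //.
have /andP[al0 al1] := alpha_bnd R _ m Aset k x.
set al := alpha R m Aset k x.
have hd : 0 < 1 - d by lra.
have mk' : (m k)%:R != 0 :> R by rewrite pnatr_eq0 -lt0n.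
have -> : P x * (1 / ((1 - d) * (m k)%:R)) = (1 / (1 - d)) * P x / (m k)%:R.
  by field; rewrite mk' gt_eqF.
case: ifP => _; (apply: ler_wpM2r; first by rewrite invr_ge0 ler0n);
  (apply: ler_wpM2r => //); last by rewrite ge_min lexx orbT.
have hd0 : 0 <= 1 / (1 - d) by rewrite divr_ge0 ?ler01 // ltW.
rewrite ge_max hd0 /=.
case: (lerP al d) => ald.
  apply: le_trans hd0.
  apply: mulr_le0_ge0; first by lra.
  by rewrite invr_ge0 mulr_ge0 // ltW.
have alp : 0 < al by lra.
apply: le_trans (_ : _ <= al / (al * (1 - d))) _.
  apply: ler_wpM2r; first by rewrite invr_ge0 mulr_ge0 // ltW.
  lra.
rewrite le_eqVlt; apply/orP; left; apply/eqP.
by field; rewrite !gt_eqF.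
Qed.

Lemma Pstep_sum (R : realFieldType) n m (Aset : seq (hyp n)) k (d : R) P x :
  0 <= d <= 1/2 -> (0 < m k)%N -> size x = k -> 0 <= P x ->
  \sum_(y <- iota 0 (m k)) Pstep m Aset k d P (rcons x y) <= P x.
Proof.
move=> hd mk hs P0.
under eq_bigr => y _ do rewrite Pstep_rcons //.
rewrite (sum_if _ _ (fun y => inB Aset k (rcons x y))).
set b := (fun y => inB Aset k (rcons x y)).
have hC : (count (predC b) (iota 0 (m k)))%:R =
          (m k)%:R - (count b (iota 0 (m k)))%:R :> R.
  have e := count_predC b (iota 0 (m k)); rewrite size_iota in e.
  by apply/eqP; rewrite eq_sym subr_eq -natrD addnC e.
rewrite hC.
have key := keyineq _ _ _ (alpha_bnd R _ m Aset k x) hd.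
have hal : alpha R m Aset k x = (count b (iota 0 (m k)))%:R / (m k)%:R by [].
set al := alpha R m Aset k x in key hal *.
set M1 := Num.max _ _ in key *.
set M2 := Num.min _ _ in key *.
have mk' : (m k)%:R != 0 :> R by rewrite pnatr_eq0 -lt0n.
have -> : (count b (iota 0 (m k)))%:R * (M1 * P x / (m k)%:R) +
  ((m k)%:R - (count b (iota 0 (m k)))%:R) * (M2 * P x / (m k)%:R) =
  P x * (al * M1 + (1 - al) * M2).
  by rewrite hal; field.
by apply: le_trans (ler_wpM2l P0 key) _; rewrite mulr1.
Qed.

Lemma inhyp_rcons1 n (A : hyp n) x y :
  (forall i : 'I_n, i \in Fh A -> (i < size x)%N) ->
  inhyp A (rcons x y) -> inhyp A x.
Proof.
move=> hF /forallP h; apply/forallP => i. have := h i.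
case hAi: (A i) => [w|] //.
have hi : (i < size x)%N by apply: hF; rewrite /Fh inE hAi.
by rewrite nth_rcons hi.
Qed.

Lemma inhyp_rcons2 n (A : hyp n) (ik : 'I_n) v x y :
  A ik = Some v -> (forall i : 'I_n, i \in Fh A -> (i <= size x)%N) ->
  (ik : nat) = size x -> inhyp A (rcons x y) ->
  inhyp [ffun i => if i == ik then None else A i] x && (y == v).
Proof.
move=> hAk hF hik /forallP h; apply/andP; split.
  apply/forallP => i; rewrite ffunE; case: eqP => // /eqP hne.
  have := h i; case hAi: (A i) => [w|] //.
  have : (i <= size x)%N by apply: hF; rewrite /Fh inE hAi.
  rewrite leq_eqVlt => /orP [/eqP e|hlt].
    by move: hne; rewrite (_ : i = ik) ?eqxx //; apply: val_inj; rewrite /= e hik.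
  by rewrite nth_rcons hlt.
by have := h ik; rewrite hAk nth_rcons hik ltnn eqxx.
Qed.

Arguments size_Qseq {m k x}.
Arguments inhyp_rcons1 {n A x y}.
Arguments inhyp_rcons2 {n A ik v x y}.

Lemma main (R : realFieldType) (n : nat) (m : nat -> nat)
  (Aset : seq (hyp n)) (a : nat) (Pa : seq nat -> R) (delta : nat -> R) :
  (forall i : nat, (i < n)%N -> (2 <= m i)%N) -> (a <= n)%N ->
  (forall x, x \in Qseq m a -> 0 <= Pa x) ->
  (forall i : nat, (a <= i < n)%N -> 0 <= delta i <= 1 / 2) ->
  forall j, (a + j <= n)%N ->
  (forall z, z \in Qseq m (a + j) -> 0 <= Piter m Aset a delta Pa j z) /\
  forall (A : hyp n) (I J : {set 'I_n}), hyp_valid m A ->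
    (forall i : 'I_n, i \in Fh A -> (i < a + j)%N) ->
    (forall i : 'I_n, i \in I -> (i < a)%N) ->
    (forall j0 : 'I_n, j0 \in J -> (a <= j0 < a + j)%N) ->
    Fh A = I :|: J ->
    measQ m (a + j) (Piter m Aset a delta Pa j) (inhyp A) <= cI m a Pa I * nu m delta J.
Proof.
move=> hm han hPa hd; elim=> [|j IH] hj.
  rewrite addn0; split => // A I J hA hFA hI hJ hF.
  have nu1 : nu m delta J = 1.
    by rewrite /nu big1 // => i /hJ /andP[h1 h2]; lia.
  rewrite nu1 mulr1.
  pose x0 := mkseq (fun i => if @insub _ (fun i => (i < n)%N) 'I_n i is Some o
                             then odflt 0%N (A o) else 0%N) a.
  have hx0 : x0 \in Qseq m a.
    apply: mem_Qseq; first by rewrite size_mkseq.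
    move=> i hi; rewrite nth_mkseq //.
    case: insubP => [o _ ho|_].
      case hAo: (A o) => [w|] /=; first by rewrite -ho; exact: hA hAo.
      by have := hm o (ltn_ord o); rewrite ho; lia.
    by have := hm i (leq_trans hi han); lia.
  have hA0 : hyp_of I x0 = A.
    apply/ffunP => i; rewrite ffunE; case: ifP => hiI.
      have hia := hI i hiI.
      rewrite nth_mkseq // valK /=.
      case hAi: (A i) => [w|] //.
      have : i \in Fh A by rewrite hF in_setU hiI.
      by rewrite /Fh inE hAi.
    have : i \notin Fh A.
      rewrite hF in_setU hiI /=; apply/negP => /hJ /andP[h1 h2]; lia.
    by rewrite /Fh inE negbK => /eqP ->.
  rewrite /cI -hA0.
  have H := bigmax_ge _ _ (fun x => measQ m a Pa (inhyp (hyp_of I x))) _ _ hx0.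
  exact: H.
have hj' : (a + j <= n)%N by rewrite addnS in hj; exact: ltnW.
have hk : (a + j < n)%N by rewrite addnS in hj.
have [IH0 IH1] := IH hj'.
have hdk : 0 <= delta (a + j)%N <= 1 / 2 by apply: hd; rewrite leq_addr hk.
have mk : (0 < m (a + j))%N by have := hm _ hk; lia.
rewrite addnS /=.
have [k hkdef] : exists k, k = (a + j)%N by exists (a + j)%N.
rewrite -hkdef in IH0 IH1 hk hdk mk hj' *.
set P := Piter m Aset a delta Pa j in IH0 IH1 *.
have -> : delta (a + j)%N = delta k by rewrite hkdef.
split.
  move=> z /Qseq_rcons [x [y [hx hy ->]]].
  by apply: Pstep_ge0 => //; [exact: (size_Qseq hx) | exact: (IH0 _ hx)].
move=> A I J hA hFA hI hJ hF.
rewrite /measQ big_mkcond sum_Qseq_S.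
pose ik := Ordinal hk.
have ikI : ik \notin I.
  apply/negP => /hI /=; lia.
case hAk: (A ik) => [v|].
  have ikJ : ik \in J.
    have : ik \in Fh A by rewrite /Fh inE hAk.
    by rewrite hF in_setU (negbTE ikI).
  pose A' : hyp n := [ffun i => if i == ik then None else A i].
  have hA' : hyp_valid m A'.
    move=> i w; rewrite ffunE; case: (i == ik) => //; exact: hA.
  have hne : forall i : 'I_n, i != ik -> (i : nat) != k.
    move=> i hi; apply/eqP => e; move/eqP: hi; apply; apply: val_inj; exact e.
  have hFA' : forall i : 'I_n, i \in Fh A' -> (i < k)%N.
    move=> i; rewrite /Fh inE ffunE; case: ifP => [_|/negbT hi hAi].
      by [].
    have := hFA i; rewrite /Fh inE => /(_ hAi).
    have := hne i hi; lia.
  have hJ' : forall j0 : 'I_n, j0 \in J :\ ik -> (a <= j0 < k)%N.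
    move=> j0; rewrite in_setD1 => /andP[hi hj0].
    have := hJ j0 hj0; have := hne j0 hi; lia.
  have hF' : Fh A' = I :|: (J :\ ik).
    apply/setP => i; rewrite /Fh !inE ffunE.
    case: (eqVneq i ik) => [->|hi]; first by rewrite eqxx (negbTE ikI).
    rewrite /=.
    have : (i \in Fh A) = (i \in I :|: J) by rewrite hF.
    by rewrite /Fh !inE => ->.
  have IHA := IH1 A' I (J :\ ik) hA' hFA' hI hJ' hF'.
  set t := 1 / ((1 - delta k) * (m k)%:R).
  have ht : 0 <= t.
    case/andP: hdk => d0 d1.
    apply: divr_ge0; first exact: ler01.
    apply: mulr_ge0; last exact: ler0n.
    lra.
  have nuJ : nu m delta J = nu m delta (J :\ ik) * t.
    rewrite /nu (bigD1 ik ikJ) /= mulrC; congr (_ * _).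
    by apply: eq_bigl => i; rewrite in_setD1 andbC.
  rewrite nuJ mulrA; apply: le_trans (ler_wpM2r ht IHA).
  rewrite /measQ [X in _ <= X * _]big_mkcond big_distrl /=.
  rewrite big_seq [X in _ <= X]big_seq; apply: ler_sum => x hx.
  have hs := size_Qseq hx; have P0 := IH0 x hx.
  have hFAx : forall i : 'I_n, i \in Fh A -> (i <= size x)%N.
    by move=> i /hFA; rewrite hs.
  case hx': (inhyp A' x).
    apply: le_trans (_ : \sum_(y <- iota 0 (m k)) (if y == v then P x * t else 0) <= _).
      apply: ler_sum => y _; case: ifP => hin.
        case/andP: (inhyp_rcons2 hAk hFAx (esym hs) hin) => _ /eqP ->.
        by rewrite eqxx; apply: Pstep_le.
      by case: ifP => _ //; apply: mulr_ge0.
    rewrite (sum_if _ _ (fun y => y == v)) mulr0 addr0.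
    have hv : (v < m k)%N by exact: hA hAk.
    have -> : count (fun y => y == v) (iota 0 (m k)) = 1%N.
      by rewrite (count_uniq_mem v (iota_uniq 0 (m k))) mem_iota hv.
    by rewrite mul1r.
  rewrite mul0r big1 // => y _; case: ifP => // hin.
  by case/andP: (inhyp_rcons2 hAk hFAx (esym hs) hin); rewrite hx'.
have hne : forall i : 'I_n, i \in Fh A -> (i : nat) != k.
  move=> i hi; apply/eqP => e; move: hi.
  have -> : i = ik by apply: val_inj.
  by rewrite /Fh inE hAk.
have hFA' : forall i : 'I_n, i \in Fh A -> (i < k)%N.
  move=> i hi; have := hFA i hi; have := hne i hi; lia.
have hJ' : forall j0 : 'I_n, j0 \in J -> (a <= j0 < k)%N.
  move=> j0 hj0; have hi : j0 \in Fh A by rewrite hF in_setU hj0 orbT.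
  have := hJ j0 hj0; have := hne j0 hi; lia.
apply: le_trans (IH1 A I J hA hFA' hI hJ' hF).
rewrite /measQ [X in _ <= X]big_mkcond.
rewrite big_seq [X in _ <= X]big_seq; apply: ler_sum => x hx.
have hs := size_Qseq hx; have P0 := IH0 x hx.
have hFAx : forall i : 'I_n, i \in Fh A -> (i < size x)%N.
  by move=> i /hFA'; rewrite hs.
case hx': (inhyp A x).
  apply: le_trans (Pstep_sum _ _ _ _ _ _ _ _ _ _ _ _); try eassumption.
  apply: ler_sum => y _; case: ifP => _ //.
  exact: Pstep_ge0.
rewrite big1 // => y _; case: ifP => // hin.
by move: (inhyp_rcons1 hFAx hin); rewrite hx'.
Qed.

Theorem lemma3p3 (R : realFieldType) (n : nat) (m : nat -> nat)
  (Aset : seq (hyp n)) (a : nat) (Pa : seq nat -> R) (delta : nat -> R)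
  (k : nat) (A : hyp n) (I J : {set 'I_n}) :
  (forall i : nat, (i < n)%N -> (2 <= m i)%N) ->
  (forall h, h \in Aset -> hyp_valid m h) ->
  (forall h, h \in Aset -> Fh h != set0) ->
  uniq [seq Fh h | h <- Aset] ->
  (a <= n)%N ->
  (forall x, x \in Qseq m a -> 0 <= Pa x) ->
  \sum_(x <- Qseq m a) Pa x = 1 ->
  (forall i : nat, (a <= i < n)%N -> 0 <= delta i <= 1 / 2) ->
  (a <= k <= n)%N ->
  hyp_valid m A ->
  (forall i : 'I_n, i \in Fh A -> (i < k)%N) ->
  (forall i : 'I_n, i \in I -> (i < a)%N) ->
  (forall j : 'I_n, j \in J -> (a <= j < k)%N) ->
  Fh A = I :|: J ->
  measQ m k (Pk m Aset a delta Pa k) (inhyp A) <= cI m a Pa I * nu m delta J.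
Proof.
move=> hm _ _ _ han hPa _ hd /andP[hak hkn] hA hFA hI hJ hF.
rewrite /Pk.
have hk : k = (a + (k - a))%N by rewrite subnKC.
move: (k - a)%N hk => j hk; subst k.
have [_ H] := main _ _ _ Aset _ _ _ hm han hPa hd _ hkn.
exact: H.
Qed.
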